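(* In the setting of the context, for each of the following six families of linear inequalities in $(\mathbf x,\mathbf y)\in\mathbb R^{2T}$, and for any given point $(\mathbf x,\mathbf y)\in\mathbb R_+^{2T}$, a most violated inequality of the family can be determined in $O(T)$ time if a violated inequality of the family exists. Here $\sigma=\lfloor(\overline C-\overline V)/V\rfloor$ and $\eta$ denotes a real parameter. (F1) $x_t\le\overline C y_t-\sum_{s\in\mathcal S}(\overline C-\overline V-sV)(y_{t-s}-y_{t-s-1})$ over all $\mathcal S\subseteq[0,\min\{L-1,T-2,\sigma\}]_{\mathbb Z}$ and $t\in[1,T]_{\mathbb Z}$ with $t\ge s+2$ for all $s\in\mathcal S$. (F2) $x_t\le\overline C y_t-\sum_{s\in\mathcal S}(\overline C-\overline V-sV)(y_{t+s}-y_{t+s+1})$ over the same $\mathcal S$ and $t\in[1,T]_{\mathbb Z}$ with $t\le T-s-1$ for all $s\in\mathcal S$. (F3) $x_t\le(\overline C-\eta V)y_t+\eta Vy_{t+1}-\sum_{s\in\mathcal S}(\overline C-\overline V-sV)(y_{t-s}-y_{t-s-1})$ over all $\mathcal S\subseteq[0,\min\{L-1,T-3,\sigma\}]_{\mathbb Z}$, real $\eta\in[0,\min\{L-1,(\overline C-\overline V)/V\}]$, and $t\in[1,T-1]_{\mathbb Z}$ with $t\ge s+2$ for all $s\in\mathcal S$. (F4) $x_t\le(\overline C-\eta V)y_t+\eta Vy_{t-1}-\sum_{s\in\mathcal S}(\overline C-\overline V-sV)(y_{t+s}-y_{t+s+1})$ over the same $\mathcal S,\eta$ as in (F3) and $t\in[2,T]_{\mathbb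 Z}$ with $t\le T-s-1$ for all $s\in\mathcal S$. (F5) $x_t\le(\overline V+\eta V)y_t+(\overline C-\overline V-\eta V)y_{t-1}-\sum_{s\in\mathcal S}(\overline C-\overline V-sV)(y_{t-s}-y_{t-s-1})$ over all $\mathcal S\subseteq[1,\min\{L,T-2,\sigma\}]_{\mathbb Z}$, real $\eta\in[0,\min\{L,(\overline C-\overline V)/V\}]$, and $t\in[2,T]_{\mathbb Z}$ with $t\ge s+2$ for all $s\in\mathcal S$. (F6) $x_t\le(\overline V+\eta V)y_t+(\overline C-\overline V-\eta V)y_{t+1}-\sum_{s\in\mathcal S}(\overline C-\overline V-sV)(y_{t+s}-y_{t+s+1})$ over the same $\mathcal S,\eta$ as in (F5) and $t\in[1,T-1]_{\mathbb Z}$ with $t\le T-s-1$ for all $s\in\mathcal S$.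
   Context: For integers $a,b$, $[a,b]_{\mathbb Z}=\{a,a+1,\dots,b\}$ if $a\le b$ and $\emptyset$ otherwise. Fix a positive integer $T$, a positive integer $L$ (minimum up time), and reals $\overline C,\underline C,V,\overline V$ with $\overline C>\underline C>0$, $V>0$, $\overline V+V\le\overline C$ and $\underline C<\overline V<\underline C+V$; $\mathbf x=(x_1,\dots,x_T)$, $\mathbf y=(y_1,\dots,y_T)$. For an inequality $a^\top(\mathbf x,\mathbf y)\le b$, its violation at a given point is $a^\top(\mathbf x,\mathbf y)-b$; it is violated if this is positive, and a most violated inequality of a family is one maximizing this quantity over the family. Time is measured in arithmetic operations and comparisons on the input numbers. *)

(* Defs.v *)
From HB Require Import structures.
From mathcomp Require Import all_boot all_order all_algebra.
From mathcomp Require Import reals.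
Set Implicit Arguments. Unset Strict Implicit. Unset Printing Implicit Defensive.
Import Order.TTheory GRing.Theory Num.Theory.
Local Open Scope ring_scope.

(* Model of computation: algebraic computation trees.                 *)
(* Registers hold reals; initially the input numbers.  Each internal   *)
(* node performs ONE arithmetic operation (on two registers, result    *)
(* appended as a new register), pushes one rational constant, or      *)
(* performs ONE comparison r_i <= r_j and branches.  A leaf outputs an *)
(* inequality of a family: (t, Sx, index of the register holding eta).  *)
(* Running time = number of internal nodes on the execution path.      *)
Inductive aop := AAdd | ASub | AMul | ADiv.

Inductive ctree :=
| CLeaf of nat & seq nat & nat
| CConst of rat & ctree
| CArith of aop & nat & nat & ctree
| CBranch of nat & nat & ctree & ctree.

Definition aop_eval (R : realType) (o : aop) (a b : R) : R :=
  match o with AAdd => a + b | ASub => a - b | AMul => a * b | ADiv => a / b end.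

Fixpoint run (R : realType) (p : ctree) (regs : seq R) : (nat * seq nat * R) * nat :=
  match p with
  | CLeaf t Sx e => ((t, Sx, nth 0 regs e), 0%N)
  | CConst q k => let r := run k (rcons regs (ratr q)) in (r.1, r.2.+1)
  | CArith o i j k =>
      let r := run k (rcons regs (aop_eval o (nth 0 regs i) (nth 0 regs j))) in
      (r.1, r.2.+1)
  | CBranch i j k1 k2 =>
      let r := if nth 0 regs i <= nth 0 regs j then run k1 regs else run k2 regs in
      (r.1, r.2.+1)
  end.

Definition inputs (R : realType) (T : nat) (Cb Cu V Vb : R) (x y : nat -> R) : seq R :=
  [:: Cb; Cu; V; Vb] ++ [seq x i | i <- iota 1 T] ++ [seq y i | i <- iota 1 T].

(* The six families.  x, y are indexed 1..T (other values irrelevant). *)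
Inductive fam := F1 | F2 | F3 | F4 | F5 | F6.

Definition sigma (R : realType) (Cb V Vb : R) : int := Num.floor ((Cb - Vb) / V).

Definition sum_back (R : realType) (Cb V Vb : R) (y : nat -> R) (t : nat) (Sx : seq nat) : R :=
  \sum_(s <- Sx) (Cb - Vb - s%:R * V) * (y (t - s)%N - y (t - s - 1)%N).
Definition sum_fwd (R : realType) (Cb V Vb : R) (y : nat -> R) (t : nat) (Sx : seq nat) : R :=
  \sum_(s <- Sx) (Cb - Vb - s%:R * V) * (y (t + s)%N - y (t + s + 1)%N).

Definition rhs (R : realType) (f : fam) (Cb V Vb : R) (y : nat -> R)
    (t : nat) (Sx : seq nat) (eta : R) : R :=
  match f with
  | F1 => Cb * y t - sum_back Cb V Vb y t Sx
  | F2 => Cb * y t - sum_fwd Cb V Vb y t Sx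
  | F3 => (Cb - eta * V) * y t + eta * V * y t.+1 - sum_back Cb V Vb y t Sx
  | F4 => (Cb - eta * V) * y t + eta * V * y t.-1 - sum_fwd Cb V Vb y t Sx
  | F5 => (Vb + eta * V) * y t + (Cb - Vb - eta * V) * y t.-1 - sum_back Cb V Vb y t Sx
  | F6 => (Vb + eta * V) * y t + (Cb - Vb - eta * V) * y t.+1 - sum_fwd Cb V Vb y t Sx
  end.

Definition violation (R : realType) (f : fam) (Cb V Vb : R) (x y : nat -> R)
    (t : nat) (Sx : seq nat) (eta : R) : R :=
  x t - rhs f Cb V Vb y t Sx eta.

(* Sx is a subset (duplicate-free list) of [lo, min{L - dl, T - dT, sigma}]_Z,
   written without truncated subtraction *)
Definition S_ok (R : realType) (Cb V Vb : R) (T L lo dL dT : nat) (Sx : seq nat) : bool :=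
  uniq Sx && all (fun s => [&& lo <= s, s + dL <= L, s + dT <= T
                          & (s%:Z <= sigma Cb V Vb)%R])%N Sx.

Definition in_family (R : realType) (f : fam) (T L : nat) (Cb V Vb : R)
    (t : nat) (Sx : seq nat) (eta : R) : Prop :=
  match f with
  | F1 => S_ok Cb V Vb T L 0 1 2 Sx /\ (1 <= t <= T)%N
          /\ all (fun s => s + 2 <= t)%N Sx
  | F2 => S_ok Cb V Vb T L 0 1 2 Sx /\ (1 <= t <= T)%N
          /\ all (fun s => t + s + 1 <= T)%N Sx
  | F3 => S_ok Cb V Vb T L 0 1 3 Sx
          /\ 0 <= eta /\ eta <= (L%:R - 1) /\ eta <= (Cb - Vb) / V
          /\ (1 <= t /\ t + 1 <= T)%N /\ all (fun s => s + 2 <= t)%N Sx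
  | F4 => S_ok Cb V Vb T L 0 1 3 Sx
          /\ 0 <= eta /\ eta <= (L%:R - 1) /\ eta <= (Cb - Vb) / V
          /\ (2 <= t <= T)%N /\ all (fun s => t + s + 1 <= T)%N Sx
  | F5 => S_ok Cb V Vb T L 1 0 2 Sx
          /\ 0 <= eta /\ eta <= L%:R /\ eta <= (Cb - Vb) / V
          /\ (2 <= t <= T)%N /\ all (fun s => s + 2 <= t)%N Sx
  | F6 => S_ok Cb V Vb T L 1 0 2 Sx
          /\ 0 <= eta /\ eta <= L%:R /\ eta <= (Cb - Vb) / V
          /\ (1 <= t /\ t + 1 <= T)%N /\ all (fun s => t + s + 1 <= T)%N Sx
  end.

(* Main.v *)
Require Import Defs.
From HB Require Import structures.
From mathcomp Require Import all_boot all_order all_algebra.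
From mathcomp Require Import reals.
From mathcomp Require Import zify ring lra.
Import Order.TTheory GRing.Theory Num.Theory.
Local Open Scope ring_scope.

Inductive prog (A : Type) : Type :=
| Ret of A
| POp of aop & nat & nat & (nat -> prog A)
| PCst of rat & (nat -> prog A)
| PBr of nat & nat & prog A & prog A.
Arguments Ret {A}.
Arguments POp {A}.
Arguments PCst {A}.
Arguments PBr {A}.

Fixpoint bind {A B : Type} (p : prog A) (f : A -> prog B) : prog B :=
  match p with
  | Ret a => f a
  | POp o i j k => POp o i j (fun r => bind (k r) f)
  | PCst q k => PCst q (fun r => bind (k r) f)
  | PBr i j p1 p2 => PBr i j (bind p1 f) (bind p2 f)
  end.

Fixpoint pcomp {A : Type} (p : prog A) (n : nat) (K : A -> nat -> ctree) : ctree :=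
  match p with
  | Ret a => K a n
  | POp o i j k => CArith o i j (pcomp (k n) n.+1 K)
  | PCst q k => CConst q (pcomp (k n) n.+1 K)
  | PBr i j p1 p2 => CBranch i j (pcomp p1 n K) (pcomp p2 n K)
  end.

Section Sem.
Variable R : realType.

Fixpoint sem {A : Type} (p : prog A) (regs : seq R) : A * seq R * nat :=
  match p with
  | Ret a => (a, regs, 0%N)
  | POp o i j k =>
      let r := sem (k (size regs)) (rcons regs (aop_eval o (nth 0 regs i) (nth 0 regs j))) in
      (r.1, r.2.+1)
  | PCst q k => let r := sem (k (size regs)) (rcons regs (ratr q)) in (r.1, r.2.+1)
  | PBr i j p1 p2 =>
      let r := if nth 0 regs i <= nth 0 regs j then sem p1 regs else sem p2 regs in
      (r.1, r.2.+1)
  end.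

Lemma comp_run (A : Type) (p : prog A) K (regs : seq R) :
  run (pcomp p (size regs) K) regs =
  let r := sem p regs in
  ((run (K r.1.1 (size r.1.2)) r.1.2).1, ((run (K r.1.1 (size r.1.2)) r.1.2).2 + r.2)%N).
Proof.
elim: p regs => [a|o i j k IH|q k IH|i j p1 IH1 p2 IH2] regs /=.
- by rewrite addn0; case: (run _ _).
- by move: (IH (size regs) (rcons regs (aop_eval o (nth 0 regs i) (nth 0 regs j))));
    rewrite size_rcons => -> /=; rewrite addnS.
- by move: (IH (size regs) (rcons regs (ratr q))); rewrite size_rcons => -> /=; rewrite addnS.
- by case: ifP => _; rewrite ?IH1 ?IH2 /= addnS.
Qed.

Lemma sem_bind (A B : Type) (p : prog A) (f : A -> prog B) (regs : seq R) :
  sem (bind p f) regs =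
  let r := sem p regs in let r' := sem (f r.1.1) r.1.2 in (r'.1, (r.2 + r'.2)%N).
Proof.
elim: p regs => [a|o i j k IH|q k IH|i j p1 IH1 p2 IH2] regs /=.
- by case: (sem _ _).
- by rewrite IH.
- by rewrite IH.
- by case: ifP => _; rewrite ?IH1 ?IH2.
Qed.

Lemma sem_ext (A : Type) (p : prog A) (regs : seq R) :
  exists ext, (sem p regs).1.2 = regs ++ ext.
Proof.
elim: p regs => [a|o i j k IH|q k IH|i j p1 IH1 p2 IH2] regs /=.
- by exists [::]; rewrite cats0.
- have [e ->] := IH (size regs) (rcons regs (aop_eval o (nth 0 regs i) (nth 0 regs j))).
  by exists (aop_eval o (nth 0 regs i) (nth 0 regs j) :: e); rewrite -cats1 -catA.
- have [e ->] := IH (size regs) (rcons regs (ratr q)).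
  by exists (ratr q :: e); rewrite -cats1 -catA.
- by case: ifP => _; [apply: IH1 | apply: IH2].
Qed.

Definition reg (regs : seq R) i v := (i < size regs)%N /\ nth 0 regs i = v.

Lemma reg_cat regs ext i v : reg regs i v -> reg (regs ++ ext) i v.
Proof. by case=> h1 h2; split; rewrite ?size_cat ?nth_cat ?h1 //; lia. Qed.

Lemma reg_sem (A : Type) (p : prog A) regs i v : reg regs i v -> reg (sem p regs).1.2 i v.
Proof. by have [e ->] := sem_ext _ p regs; apply: reg_cat. Qed.

Lemma reg_rcons regs v : reg (rcons regs v) (size regs) v.
Proof. by split; rewrite ?size_rcons ?nth_rcons ?ltnn ?eqxx. Qed.

Lemma reg_rconsW regs w i v : reg regs i v -> reg (rcons regs w) i v.
Proof. by rewrite -cats1; apply: reg_cat. Qed.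

End Sem.
Arguments sem {R A}.
Arguments reg {R}.
Arguments reg_rconsW {R regs} w {i v}.
Arguments reg_cat {R regs} ext {i v}.
Arguments reg_sem {R A} p {regs i v}.
Arguments reg_rcons {R}.
Arguments sem_ext {R A}.
Arguments sem_bind {R A B}.
Arguments comp_run {R A}.

Section Steps.
Variable R : realType.
Lemma nth_reg (regs : seq R) i v : reg regs i v -> nth 0 regs i = v.
Proof. by case. Qed.
Lemma semOp1 {A} o i j (k : nat -> prog A) (regs : seq R) :
  (sem (POp o i j k) regs).1 = (sem (k (size regs)) (rcons regs (aop_eval o (nth 0 regs i) (nth 0 regs j)))).1.
Proof. by []. Qed.
Lemma semCst1 {A} c (k : nat -> prog A) (regs : seq R) :
  (sem (PCst c k) regs).1 = (sem (k (size regs)) (rcons regs (ratr c))).1.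
Proof. by []. Qed.
Lemma semBr1 {A} i j (p1 p2 : prog A) (regs : seq R) :
  (sem (PBr i j p1 p2) regs).1 = (if nth 0 regs i <= nth 0 regs j then sem p1 regs else sem p2 regs).1.
Proof. by []. Qed.
Lemma semBind1 {A B} (p : prog A) (f : A -> prog B) (regs : seq R) :
  (sem (bind p f) regs).1 = (sem (f (sem p regs).1.1) (sem p regs).1.2).1.
Proof. by rewrite sem_bind. Qed.
End Steps.
Arguments nth_reg {R regs i v}.
Section Steps2.
Variable R : realType.
Lemma semOp2 {A} o i j (k : nat -> prog A) (regs : seq R) :
  (sem (POp o i j k) regs).2 = (sem (k (size regs)) (rcons regs (aop_eval o (nth 0 regs i) (nth 0 regs j)))).2.+1.
Proof. by []. Qed.
Lemma semCst2 {A} cc (k : nat -> prog A) (regs : seq R) :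
  (sem (PCst cc k) regs).2 = (sem (k (size regs)) (rcons regs (ratr cc))).2.+1.
Proof. by []. Qed.
Lemma semBr2 {A} i j (p1 p2 : prog A) (regs : seq R) :
  (sem (PBr i j p1 p2) regs).2 = (if nth 0 regs i <= nth 0 regs j then sem p1 regs else sem p2 regs).2.+1.
Proof. by []. Qed.
Lemma semBind2 {A B} (p : prog A) (f : A -> prog B) (regs : seq R) :
  (sem (bind p f) regs).2 = ((sem p regs).2 + (sem (f (sem p regs).1.1) (sem p regs).1.2).2)%N.
Proof. by rewrite sem_bind. Qed.
End Steps2.

Record params := Params {
  p_lo : nat; p_dL : nat; p_dT : nat; p_tlo : nat; p_thi : nat; p_Lc : nat;
  p_etaf : bool; p_kind : bool; p_wf : nat -> nat; p_uf : nat -> nat; p_vf : nat -> nat }.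

Lemma sum_sub_le (R : realType) (I : eqType) (S U : seq I) (G : I -> R) :
  uniq S -> uniq U -> {subset S <= U} -> (forall i, i \in U -> 0 <= G i) ->
  \sum_(i <- S) G i <= \sum_(i <- U) G i.
Proof.
move=> uS uU sSU G0.
rewrite [X in _ <= X](bigID (fun i => i \in S)) /=.
have -> : \sum_(i <- U | i \in S) G i = \sum_(i <- S) G i.
  rewrite -big_filter; apply: perm_big.
  apply: uniq_perm; rewrite ?filter_uniq // => i; rewrite mem_filter.
  by apply/andP/idP => [[]//|iS]; split => //; apply: sSU.
rewrite lerDl big_seq_cond; apply: sumr_ge0 => i /andP[iU _]; exact: G0.
Qed.

Section Math.
Variable R : realType.
Variables (P : params) (T L : nat) (Cb V Vb : R) (x y : nat -> R) (N : nat).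

Definition lo := p_lo P. Definition dL := p_dL P. Definition dT := p_dT P.
Definition tlo := p_tlo P. Definition thi := p_thi P. Definition Lc := p_Lc P.
Definition etaf := p_etaf P. Definition kind := p_kind P.
Definition wf := p_wf P. Definition uf := p_uf P. Definition vf := p_vf P.

Definition A := Cb - Vb.
Definition q := A / V.
Definition E := if Lc%:R <= q then Lc%:R else q.
Definition a1 := if kind then Vb else Cb.
Definition a2 := if kind then A else 0.

Definition okS (t s : nat) :=
  [&& (lo <= s)%N, (s + dL <= L)%N, (s + dT <= T)%N, (s + 2 <= t)%N & s%:R <= q].

Definition gen_in t S eta := (tlo <= t <= thi)%N /\ uniq S /\ all (okS t) S /\
  (etaf -> 0 <= eta /\ eta <= Lc%:R /\ eta <= q).

Definition gen_viol (t : nat) S eta :=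
  x t - (a1 * y t + a2 * y (wf t) + eta * V * (y (uf t) - y (vf t))) +
  \sum_(s <- S) (A - s%:R * V) * (y (t - s)%N - y (t - s - 1)%N).

Definition dplus j := if y j <= y (j - 1)%N then 0 else y j - y (j - 1)%N.
Definition wa t := maxn (t - N) 1.
Definition wb t := (t - lo)%N.
Definition win t := index_iota (wa t).+1 (wb t).+1.
Definition Sstar t := [seq (t - j)%N | j <- win t & ~~ (y j <= y (j - 1)%N)].
Definition etastar t := if y (vf t) <= y (uf t) then 0 else E.
Definition bestval t :=
  x t - (a1 * y t + a2 * y (wf t) + etastar t * V * (y (uf t) - y (vf t))) +
  \sum_(j <- win t) (A - (t - j)%:R * V) * dplus j.
Definition Pre1 k := \sum_(2 <= j < k.+1) dplus j.
Definition Pre2 k := \sum_(2 <= j < k.+1) j%:R * dplus j.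

Hypothesis HV : 0 < V.
Hypothesis HAV : V <= A.
Hypothesis HN : forall s, (s < N)%N = [&& (s + dL <= L)%N, (s + dT <= T)%N & s%:R <= q].
Hypothesis Hetaf : ~~ etaf -> forall t, uf t = vf t.

Lemma q_ge1 : 1 <= q.
Proof. by rewrite /q ler_pdivlMr // mul1r. Qed.

Lemma E_ge0 : 0 <= E.
Proof. rewrite /E; case: ifP => _ //; have := q_ge1; lra. Qed.

Lemma E_leL : E <= Lc%:R.
Proof. by rewrite /E; case: ifP => // /negbT; rewrite -ltNge => /ltW. Qed.

Lemma E_leq : E <= q.
Proof. by rewrite /E; case: ifP. Qed.

Lemma mem_win t j : (j \in win t) = (wa t < j <= wb t)%N.
Proof. by rewrite /win mem_index_iota ltnS. Qed.

Lemma Lm1 t : gen_viol t (Sstar t) (etastar t) = bestval t.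
Proof.
rewrite /gen_viol /bestval /Sstar; congr (_ + _).
rewrite big_map big_filter big_mkcond /=; apply: eq_big_seq => j.
rewrite mem_win /wa /wb => /andP[h1 h2].
have -> : (t - (t - j) = j)%N by lia.
by rewrite /dplus; case: (y j <= y (j - 1)%N); rewrite ?mulr0.
Qed.

Lemma uniq_win t : uniq (win t).
Proof. exact: iota_uniq. Qed.

Lemma Lm3 t : (tlo <= t <= thi)%N -> gen_in t (Sstar t) (etastar t).
Proof.
move=> /andP[h1 h2]; split; first by rewrite h1 h2.
split.
  rewrite map_inj_in_uniq ?filter_uniq ?uniq_win // => i j.
  rewrite !mem_filter !mem_win /wa /wb => /andP[_ /andP[_ hi]] /andP[_ /andP[_ hj]].
  lia.
split.
  apply/allP => s /mapP[j]; rewrite mem_filter => /andP[_ jw] ->.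
  move: jw; rewrite mem_win /wa /wb => /andP[h3 h4].
  have : (t - j < N)%N by lia.
  rewrite HN => /and3P[h5 h6 h7]; rewrite /okS h5 h6 h7 /=.
  apply/andP; split; lia.
move=> _; rewrite /etastar; case: ifP => _.
  by split => //; split; [exact: ler0n | apply: le_trans q_ge1].
by split; [exact: E_ge0 | split; [exact: E_leL | exact: E_leq]].
Qed.


Lemma wpos s : s%:R <= q -> 0 <= A - s%:R * V.
Proof. by rewrite /q ler_pdivlMr // subr_ge0. Qed.

Lemma dplus_ge0 j : 0 <= dplus j.
Proof. by rewrite /dplus; case: ifP => // /negbT; rewrite -ltNge subr_ge0 => /ltW. Qed.

Lemma dplus_ge j : y j - y (j - 1)%N <= dplus j.
Proof. by rewrite /dplus; case: ifP => // h; rewrite subr_le0. Qed.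

Lemma Lm2 t S eta : gen_in t S eta -> gen_viol t S eta <= bestval t.
Proof.
move=> [ht [uS [aS Heta]]].
rewrite /gen_viol /bestval; apply: lerD.
  rewrite lerD2l lerN2 lerD2l.
  case ef: etaf.
    have [e0 [eL eq]] := Heta ef.
    have eE : eta <= E by rewrite /E; case: ifP.
    rewrite /etastar; case: ifP => hy.
      rewrite mul0r mul0r; apply: mulr_ge0; first by apply: mulr_ge0 => //; exact: ltW.
      by rewrite subr_ge0.
    have hd : y (uf t) - y (vf t) < 0 by rewrite subr_lt0 ltNge hy.
    have hVd : V * (y (uf t) - y (vf t)) < 0 by rewrite pmulr_rlt0.
    rewrite -!mulrA; nra.
  by rewrite (Hetaf (negbT ef)) subrr !mulr0.
apply: (@le_trans _ _ (\sum_(s <- S) (A - s%:R * V) * dplus (t - s)%N)).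
  rewrite big_seq [X in _ <= X]big_seq; apply: ler_sum => s sS.
  have /and5P[_ _ _ h2 hq] := allP aS s sS.
  apply: ler_wpM2l; first exact: wpos.
  exact: dplus_ge.
apply: (@le_trans _ _ (\sum_(s <- [seq (t - j)%N | j <- win t]) (A - s%:R * V) * dplus (t - s)%N)).
  apply: sum_sub_le => //.
  - rewrite map_inj_in_uniq ?uniq_win // => i j; rewrite !mem_win /wa /wb; lia.
  - move=> s sS; have /and5P[h1 h2 h3 h4 hq] := allP aS s sS.
    apply/mapP; exists (t - s)%N; last by lia.
    rewrite mem_win /wa /wb.
    have : (s < N)%N by rewrite HN h2 h3 hq.
    lia.
  - move=> s /mapP[j]; rewrite mem_win /wa /wb => /andP[h1 h2] ->.
    apply: mulr_ge0; last exact: dplus_ge0.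
    apply: wpos.
    have : (t - j < N)%N by lia.
    by rewrite HN => /and3P[].
rewrite big_map.
have -> : \sum_(j <- win t) (A - (t - j)%:R * V) * dplus (t - (t - j))%N =
          \sum_(j <- win t) (A - (t - j)%:R * V) * dplus j.
  apply: eq_big_seq => j.
  by rewrite mem_win /wa /wb => /andP[h1 h2]; congr (_ * dplus _); lia.
by [].
Qed.

Lemma Lm4 t : \sum_(j <- win t) (A - (t - j)%:R * V) * dplus j =
  if (wa t < wb t)%N then (A - t%:R * V) * (Pre1 (wb t) - Pre1 (wa t)) +
                         V * (Pre2 (wb t) - Pre2 (wa t))
  else 0.
Proof.
rewrite /win; case: ltnP => hab; last by rewrite big_geq.
have ha : (1 <= wa t)%N by rewrite /wa leq_maxr.
have hb : (wb t <= t)%N by rewrite /wb leq_subr.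
have hP : forall h : nat -> R, \sum_((wa t).+1 <= j < (wb t).+1) h j =
    \sum_(2 <= j < (wb t).+1) h j - \sum_(2 <= j < (wa t).+1) h j.
  move=> h; rewrite [X in _ = X - _](big_cat_nat _ (n := (wa t).+1)) //=; last by lia.
  by rewrite addrAC subrr add0r.
rewrite /Pre1 /Pre2 -!hP mulr_sumr mulr_sumr -big_split /=.
apply: eq_big_nat => j /andP[h1 h2].
rewrite natrB; last by lia.
ring.
Qed.

End Math.
Arguments A {R}.
Arguments q {R}.
Arguments E {R}.
Arguments a1 {R}.
Arguments a2 {R}.
Arguments okS {R}.
Arguments gen_in {R}.
Arguments gen_viol {R}.
Arguments dplus {R}.
Arguments Sstar {R}.
Arguments etastar {R}.
Arguments bestval {R}.
Arguments Pre1 {R}.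
Arguments Pre2 {R}.

Fixpoint scanN (iq s fuel : nat) : prog nat :=
  match fuel with
  | 0 => Ret s
  | f.+1 => PCst (s%:R : rat) (fun r => PBr r iq (scanN iq s.+1 f) (Ret s))
  end.

Definition upd {B : Type} (g : nat -> B) (j : nat) (v : B) := fun k => if k == j then v else g k.

Fixpoint preloop (yi : nat -> nat) (j fuel : nat) (p1 p2 : nat -> nat) (bs : nat -> bool)
  : prog ((nat -> nat) * (nat -> nat) * (nat -> bool)) :=
  match fuel with
  | 0 => Ret (p1, p2, bs)
  | f.+1 => PBr (yi j) (yi (j - 1)%N)
      (preloop yi j.+1 f (upd p1 j (p1 (j - 1)%N)) (upd p2 j (p2 (j - 1)%N)) (upd bs j false))
      (POp ASub (yi j) (yi (j - 1)%N) (fun d =>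
       POp AAdd (p1 (j - 1)%N) d (fun n1 =>
       PCst (j%:R : rat) (fun jc =>
       POp AMul jc d (fun jd =>
       POp AAdd (p2 (j - 1)%N) jd (fun n2 =>
       preloop yi j.+1 f (upd p1 j n1) (upd p2 j n2) (upd bs j true)))))))
  end.

Lemma preloopS yi j f p1 p2 bs : preloop yi j f.+1 p1 p2 bs =
  PBr (yi j) (yi (j - 1)%N)
      (preloop yi j.+1 f (upd p1 j (p1 (j - 1)%N)) (upd p2 j (p2 (j - 1)%N)) (upd bs j false))
      (POp ASub (yi j) (yi (j - 1)%N) (fun d =>
       POp AAdd (p1 (j - 1)%N) d (fun n1 =>
       PCst (j%:R : rat) (fun jc =>
       POp AMul jc d (fun jd =>
       POp AAdd (p2 (j - 1)%N) jd (fun n2 =>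
       preloop yi j.+1 f (upd p1 j n1) (upd p2 j n2) (upd bs j true))))))).
Proof. by []. Qed.

Section Progs.
Variable R : realType.

Lemma scanN_cost iq s fuel (regs : seq R) : ((sem (scanN iq s fuel) regs).2 <= 2 * fuel)%N.
Proof.
elim: fuel s regs => [|f IH] s regs //=.
case: ifP => _ /=; last by lia.
have := IH s.+1 (rcons regs (ratr s%:R)); lia.
Qed.

Lemma scanN_spec iq (qv : R) s fuel (regs : seq R) :
  reg regs iq qv -> (forall s', (s' < s)%N -> s'%:R <= qv) ->
  let n := (sem (scanN iq s fuel) regs).1.1 in
  [/\ (s <= n <= s + fuel)%N, (forall s', (s' < n)%N -> s'%:R <= qv)
    & ((n < s + fuel)%N -> ~~ (n%:R <= qv))].
Proof.
elim: fuel s regs => [|f IH] s regs hq hs /=.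
  by rewrite addn0 leqnn ltnn; split.
rewrite nth_rcons ltnn eqxx ratr_nat.
have [_ hq'] := hq; rewrite nth_rcons.
have hql : (iq < size regs)%N by case: hq.
rewrite hql hq'.
case: ifP => hsq /=.
  have := IH s.+1 (rcons regs s%:R) (reg_rconsW _ hq).
  case: (sem (scanN iq s.+1 f) _) => [[n regs'] c] /=.
  case=> //.
    by move=> s'; rewrite ltnS leq_eqVlt => /orP[/eqP->|/hs].
  move=> /andP[h1 h2] h3 h4; split => //.
    by apply/andP; split; lia.
  by move=> h; apply: h4; lia.
split => //.
  by rewrite leqnn; lia.
by rewrite hsq.
Qed.


Lemma Pre1S (y : nat -> R) j : (2 <= j)%N -> Pre1 y j = Pre1 y (j - 1)%N + dplus y j.
Proof.
move=> hj; rewrite /Pre1 big_nat_recr //=.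
by have -> : ((j - 1).+1 = j)%N by lia.
Qed.

Lemma Pre2S (y : nat -> R) j : (2 <= j)%N -> Pre2 y j = Pre2 y (j - 1)%N + j%:R * dplus y j.
Proof.
move=> hj; rewrite /Pre2 big_nat_recr //=.
by have -> : ((j - 1).+1 = j)%N by lia.
Qed.

Lemma preloop_cost yi j fuel p1 p2 bs (regs : seq R) :
  ((sem (preloop yi j fuel p1 p2 bs) regs).2 <= 6 * fuel)%N.
Proof.
elim: fuel j p1 p2 bs regs => [|f IH] j p1 p2 bs regs //=.
case: ifP => _ /=.
  by have := IH j.+1 (upd p1 j (p1 (j - 1)%N)) (upd p2 j (p2 (j - 1)%N)) (upd bs j false) regs; lia.
set rr := rcons _ _.
match goal with |- context [sem (preloop ?a ?b ?c ?d ?e ?g) ?h] => have := IH b d e g h end; lia.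
Qed.

Lemma preloop_spec (y : nat -> R) T yi j fuel p1 p2 bs (regs : seq R) :
  (2 <= j)%N -> (j + fuel <= T.+1)%N ->
  (forall k, (1 <= k <= T)%N -> reg regs (yi k) (y k)) ->
  (forall k, (1 <= k < j)%N -> [/\ reg regs (p1 k) (Pre1 y k), reg regs (p2 k) (Pre2 y k)
                                  & ((2 <= k)%N -> bs k = ~~ (y k <= y (k - 1)%N))]) ->
  let r := (sem (preloop yi j fuel p1 p2 bs) regs).1 in
  forall k, (1 <= k < j + fuel)%N -> [/\ reg r.2 (r.1.1.1 k) (Pre1 y k), reg r.2 (r.1.1.2 k) (Pre2 y k)
                                  & ((2 <= k)%N -> r.1.2 k = ~~ (y k <= y (k - 1)%N))].
Proof.
elim: fuel j p1 p2 bs regs => [|f IH] j p1 p2 bs regs hj hjT hy hinv.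
  by rewrite addn0.
have hyj : reg regs (yi j) (y j) by apply: hy; lia.
have hyj1 : reg regs (yi (j - 1)%N) (y (j - 1)%N) by apply: hy; lia.
have [hp1 hp2 _] := hinv (j - 1)%N ltac:(lia).
rewrite preloopS semBr1 (nth_reg hyj) (nth_reg hyj1).
case: ifP => hle.
  have := IH j.+1 (upd p1 j (p1 (j - 1)%N)) (upd p2 j (p2 (j - 1)%N)) (upd bs j false) regs.
  move=> H; rewrite addnS; rewrite addSn in H; apply: H; [lia | lia | by [] | ].
  move=> k /andP[hk1 hk2]; rewrite /upd; case: eqP => [->|hne].
    rewrite (Pre1S _ _ hj) (Pre2S _ _ hj) /dplus hle addr0 mulr0 addr0; split => //.
  by apply: hinv; lia.
rewrite semOp1 (nth_reg hyj) (nth_reg hyj1).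
set r1 := rcons regs _.
have hd : reg r1 (size regs) (y j - y (j - 1)%N) := reg_rcons _ _.
rewrite semOp1 (nth_reg (reg_rconsW _ hp1)) (nth_reg hd).
set r2 := rcons r1 _.
have hn1 : reg r2 (size r1) (Pre1 y j).
  by rewrite (Pre1S _ _ hj) /dplus hle; apply: reg_rcons.
rewrite semCst1 ratr_nat.
set r3 := rcons r2 _.
have hjc : reg r3 (size r2) j%:R := reg_rcons _ _.
rewrite semOp1 (nth_reg hjc) (nth_reg (reg_rconsW _ (reg_rconsW _ hd))).
set r4 := rcons r3 _.
have hjd : reg r4 (size r3) (j%:R * (y j - y (j - 1)%N)) := reg_rcons _ _.
rewrite semOp1 (nth_reg hjd) (nth_reg (reg_rconsW _ (reg_rconsW _ (reg_rconsW _ (reg_rconsW _ hp2))))).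
set r5 := rcons r4 _.
have hn2 : reg r5 (size r4) (Pre2 y j).
  by rewrite (Pre2S _ _ hj) /dplus hle; apply: reg_rcons.
have lift : forall i v, reg regs i v -> reg r5 i v.
  by move=> i v h; do 5 apply: reg_rconsW.
have liftr2 : forall i v, reg r2 i v -> reg r5 i v.
  by move=> i v h; do 3 apply: reg_rconsW.
have := IH j.+1 (upd p1 j (size r1)) (upd p2 j (size r4)) (upd bs j true) r5.
move=> H; rewrite addnS; rewrite addSn in H; apply: H; [lia | lia | | ].
  by move=> k hk; apply: lift; apply: hy.
move=> k /andP[hk1 hk2]; rewrite /upd; case: eqP => [->|hne].
  by split => //; [apply: liftr2 | rewrite hle].
have [h1 h2 h3] := hinv k ltac:(lia).
by split => //; apply: lift.
Qed.

End Progs.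

Record cfg := Cfg { c_iA : nat; c_iz : nat; c_iE : nat; c_iEV : nat; c_ia1 : nat; c_ia2 : nat;
  c_N : nat; c_p1 : nat -> nat; c_p2 : nat -> nat; c_xi : nat -> nat; c_yi : nat -> nat }.

Definition etaprog (c : cfg) (u v r2 : nat) : prog (nat * nat) :=
  PBr (c_yi c v) (c_yi c u) (Ret (r2, c_iz c))
      (POp ASub (c_yi c u) (c_yi c v) (fun d =>
       POp AMul (c_iEV c) d (fun e2 =>
       POp ASub r2 e2 (fun r3 => Ret (r3, c_iE c))))).

Definition winprog (P : params) (c : cfg) (t : nat) (pr : nat * nat) : prog (nat * nat) :=
  if (wa (c_N c) t < wb P t)%N then
     POp ASub (c_p1 c (wb P t)) (c_p1 c (wa (c_N c) t)) (fun w1 =>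
     POp ASub (c_p2 c (wb P t)) (c_p2 c (wa (c_N c) t)) (fun w2 =>
     PCst (t%:R : rat) (fun tc =>
     POp AMul tc 2 (fun tv =>
     POp ASub (c_iA c) tv (fun c1 =>
     POp AMul c1 w1 (fun s1 =>
     POp AMul 2 w2 (fun s2 =>
     POp AAdd s1 s2 (fun s =>
     POp AAdd pr.1 s (fun r4 => Ret (r4, pr.2))))))))))
  else Ret pr.

Definition tstep (P : params) (c : cfg) (t : nat) : prog (nat * nat) :=
  POp AMul (c_ia1 c) (c_yi c t) (fun m1 =>
  POp AMul (c_ia2 c) (c_yi c (wf P t)) (fun m2 =>
  POp ASub (c_xi c t) m1 (fun r1 =>
  POp ASub r1 m2 (fun r2 =>
  bind (etaprog c (uf P t) (vf P t) r2) (winprog P c t))))).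

Fixpoint tloop (P : params) (c : cfg) (ts : seq nat) (bst : nat * nat * nat) : prog (nat * nat * nat) :=
  match ts with
  | [::] => Ret bst
  | t :: ts' => bind (tstep P c t) (fun pr =>
      PBr pr.1 bst.1.2 (tloop P c ts' bst) (tloop P c ts' (t, pr.1, pr.2)))
  end.

Section TProgs.
Variable R : realType.
Variables (P : params) (c : cfg) (T : nat) (Cb V Vb : R) (x y : nat -> R).

Definition GoodC (regs : seq R) :=
  reg regs 2 V /\ reg regs (c_iA c) (A Cb Vb) /\ reg regs (c_iz c) 0 /\
  reg regs (c_iE c) (E P Cb V Vb) /\ reg regs (c_iEV c) (E P Cb V Vb * V) /\
  reg regs (c_ia1 c) (a1 P Cb Vb) /\ reg regs (c_ia2 c) (a2 P Cb Vb) /\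
  (forall k, (1 <= k <= T)%N -> [/\ reg regs (c_xi c k) (x k), reg regs (c_yi c k) (y k),
       reg regs (c_p1 c k) (Pre1 y k) & reg regs (c_p2 c k) (Pre2 y k)]).

Lemma GoodC_cat regs e : GoodC regs -> GoodC (regs ++ e).
Proof.
move=> [h1 [h2 [h3 [h4 [h5 [h6 [h7 h8]]]]]]].
do 7 (split; first by apply: reg_cat).
by move=> k hk; have [? ? ? ?] := h8 k hk; split; apply: reg_cat.
Qed.

Lemma GoodC_sem {B} (p : prog B) regs : GoodC regs -> GoodC (sem p regs).1.2.
Proof. by have [e ->] := sem_ext p regs; apply: GoodC_cat. Qed.

Definition validt t := [/\ (1 <= t <= T)%N, (1 <= wf P t <= T)%N, (1 <= uf P t <= T)%N
   & (1 <= vf P t <= T)%N].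

Lemma etaprog_spec regs u v r2 v2 :
  GoodC regs -> (1 <= u <= T)%N -> (1 <= v <= T)%N -> reg regs r2 v2 ->
  let r := (sem (etaprog c u v r2) regs).1 in
  reg r.2 r.1.1 (v2 - (if y v <= y u then 0 else E P Cb V Vb * V * (y u - y v))) /\
  reg r.2 r.1.2 (if y v <= y u then 0 else E P Cb V Vb).
Proof.
move=> [hV [hA [hz [hE [hEV [ha1 [ha2 hk]]]]]]] hu hv hr2.
have [_ hyu _ _] := hk u hu; have [_ hyv _ _] := hk v hv.
rewrite /etaprog semBr1 (nth_reg hyu) (nth_reg hyv).
case: ifP => h; first by rewrite /= subr0.
rewrite semOp1 (nth_reg hyu) (nth_reg hyv).
set r1 := rcons regs _.
have hd : reg r1 (size regs) (y u - y v) := reg_rcons _ _.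
rewrite semOp1 (nth_reg (reg_rconsW _ hEV)) (nth_reg hd).
set r2' := rcons r1 _.
have he2 : reg r2' (size r1) (E P Cb V Vb * V * (y u - y v)) := reg_rcons _ _.
rewrite semOp1 (nth_reg (reg_rconsW _ (reg_rconsW _ hr2))) (nth_reg he2) /=.
split; first exact: reg_rcons.
by do 3 apply: reg_rconsW.
Qed.


Definition winval t := if (wa (c_N c) t < wb P t)%N then
  (A Cb Vb - t%:R * V) * (Pre1 y (wb P t) - Pre1 y (wa (c_N c) t)) +
  V * (Pre2 y (wb P t) - Pre2 y (wa (c_N c) t)) else 0.

Lemma winprog_spec regs t pr v3 ev :
  GoodC regs -> (wb P t <= T)%N -> reg regs pr.1 v3 -> reg regs pr.2 ev ->
  let r := (sem (winprog P c t pr) regs).1 in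
  reg r.2 r.1.1 (v3 + winval t) /\ reg r.2 r.1.2 ev.
Proof.
move=> [hV [hA [hz [hE [hEV [ha1 [ha2 hk]]]]]]] hb h3 hev.
rewrite /winprog /winval; case: ifP => hab; last by rewrite /= addr0.
have ha : (1 <= wa (c_N c) t)%N by rewrite /wa leq_maxr.
have [_ _ hP1b hP2b] := hk (wb P t) ltac:(lia).
have [_ _ hP1a hP2a] := hk (wa (c_N c) t) ltac:(lia).
rewrite semOp1 (nth_reg hP1b) (nth_reg hP1a).
set r1 := rcons regs _.
have L1 : forall i v, reg regs i v -> reg r1 i v := fun i v h => reg_rconsW _ h.
have hw1 : reg r1 (size regs) (Pre1 y (wb P t) - Pre1 y (wa (c_N c) t)) := reg_rcons _ _.
rewrite semOp1 (nth_reg (L1 _ _ hP2b)) (nth_reg (L1 _ _ hP2a)).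
set r2 := rcons r1 _.
have L2 : forall i v, reg r1 i v -> reg r2 i v := fun i v h => reg_rconsW _ h.
have hw2 : reg r2 (size r1) (Pre2 y (wb P t) - Pre2 y (wa (c_N c) t)) := reg_rcons _ _.
rewrite semCst1 ratr_nat.
set r3 := rcons r2 _.
have L3 : forall i v, reg r2 i v -> reg r3 i v := fun i v h => reg_rconsW _ h.
have htc : reg r3 (size r2) (t%:R) := reg_rcons _ _.
rewrite semOp1 (nth_reg htc) (nth_reg (L3 _ _ (L2 _ _ (L1 _ _ hV)))).
set r4 := rcons r3 _.
have L4' : forall i v, reg r3 i v -> reg r4 i v := fun i v h => reg_rconsW _ h.
have htv : reg r4 (size r3) (t%:R * V) := reg_rcons _ _.
rewrite semOp1 (nth_reg htv) (nth_reg (L4' _ _ (L3 _ _ (L2 _ _ (L1 _ _ hA))))).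
set r5 := rcons r4 _.
have L5 : forall i v, reg r4 i v -> reg r5 i v := fun i v h => reg_rconsW _ h.
have hc1 : reg r5 (size r4) (A Cb Vb - t%:R * V) := reg_rcons _ _.
rewrite semOp1 (nth_reg hc1) (nth_reg (L5 _ _ (L4' _ _ (L3 _ _ (L2 _ _ hw1))))).
set r6 := rcons r5 _.
have L6 : forall i v, reg r5 i v -> reg r6 i v := fun i v h => reg_rconsW _ h.
have hs1 : reg r6 (size r5) ((A Cb Vb - t%:R * V) * (Pre1 y (wb P t) - Pre1 y (wa (c_N c) t))) := reg_rcons _ _.
rewrite semOp1 (nth_reg (L6 _ _ (L5 _ _ (L4' _ _ (L3 _ _ (L2 _ _ (L1 _ _ hV))))))) (nth_reg (L6 _ _ (L5 _ _ (L4' _ _ (L3 _ _ hw2))))).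
set r7 := rcons r6 _.
have L7 : forall i v, reg r6 i v -> reg r7 i v := fun i v h => reg_rconsW _ h.
have hs2 : reg r7 (size r6) (V * (Pre2 y (wb P t) - Pre2 y (wa (c_N c) t))) := reg_rcons _ _.
rewrite semOp1 (nth_reg (L7 _ _ hs1)) (nth_reg hs2).
set r8 := rcons r7 _.
have L8 : forall i v, reg r7 i v -> reg r8 i v := fun i v h => reg_rconsW _ h.
have hs : reg r8 (size r7) ((A Cb Vb - t%:R * V) * (Pre1 y (wb P t) - Pre1 y (wa (c_N c) t)) +
  V * (Pre2 y (wb P t) - Pre2 y (wa (c_N c) t))) := reg_rcons _ _.
have Lall : forall i v, reg regs i v -> reg r8 i v.
  by move=> i v h; apply/L8/L7/L6/L5/L4'/L3/L2/L1.
rewrite semOp1 (nth_reg (Lall _ _ h3)) (nth_reg hs) /=.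
split; first exact: reg_rcons.
by apply: reg_rconsW; apply: Lall.
Qed.

Lemma tstep_spec regs t :
  GoodC regs -> validt t ->
  let r := (sem (tstep P c t) regs).1 in
  reg r.2 r.1.1 (x t - (a1 P Cb Vb * y t + a2 P Cb Vb * y (wf P t) +
                 etastar P Cb V Vb y t * V * (y (uf P t) - y (vf P t))) + winval t) /\
  reg r.2 r.1.2 (etastar P Cb V Vb y t).
Proof.
move=> hG [ht hw hu hv].
have [hV [hA [hz [hE [hEV [ha1 [ha2 hk]]]]]]] := hG.
have [hxt hyt _ _] := hk t ht.
have [_ hyw _ _] := hk _ hw.
rewrite /tstep semOp1 (nth_reg ha1) (nth_reg hyt).
set r1 := rcons regs _.
have L1 : forall i v, reg regs i v -> reg r1 i v := fun i v h => reg_rconsW _ h.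
have hm1 : reg r1 (size regs) (a1 P Cb Vb * y t) := reg_rcons _ _.
rewrite semOp1 (nth_reg (L1 _ _ ha2)) (nth_reg (L1 _ _ hyw)).
set r2 := rcons r1 _.
have L2 : forall i v, reg r1 i v -> reg r2 i v := fun i v h => reg_rconsW _ h.
have hm2 : reg r2 (size r1) (a2 P Cb Vb * y (wf P t)) := reg_rcons _ _.
rewrite semOp1 (nth_reg (L2 _ _ (L1 _ _ hxt))) (nth_reg (L2 _ _ hm1)).
set r3 := rcons r2 _.
have L3 : forall i v, reg r2 i v -> reg r3 i v := fun i v h => reg_rconsW _ h.
have hr1 : reg r3 (size r2) (x t - a1 P Cb Vb * y t) := reg_rcons _ _.
rewrite semOp1 (nth_reg hr1) (nth_reg (L3 _ _ hm2)).
set r4 := rcons r3 _.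
have hr2 : reg r4 (size r3) (x t - a1 P Cb Vb * y t - a2 P Cb Vb * y (wf P t)) := reg_rcons _ _.
have G4 : GoodC r4.
  by rewrite /r4 /r3 /r2 /r1 -!cats1 -!catA; apply: GoodC_cat.
rewrite semBind1.
have := etaprog_spec _ _ _ _ _ G4 hu hv hr2.
have G5 := GoodC_sem (etaprog c (uf P t) (vf P t) (size r3)) _ G4.
case: (sem (etaprog c (uf P t) (vf P t) (size r3)) r4) G5 => [[pr regs'] cc] /= G5 [h1 h2].
have hb : (wb P t <= T)%N by rewrite /wb; lia.
have [h3 h4] := winprog_spec _ _ _ _ _ G5 hb h1 h2.
split => //.
move: h3; congr (reg _ _ _).
rewrite /etastar; case: ifP => _; ring.
Qed.

Lemma etaprog_cost (regs : seq R) u v r2 : ((sem (etaprog c u v r2) regs).2 <= 4)%N.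
Proof. by rewrite /etaprog /=; case: ifP. Qed.

Lemma winprog_cost (regs : seq R) t pr : ((sem (winprog P c t pr) regs).2 <= 9)%N.
Proof. by rewrite /winprog; case: ifP. Qed.

Lemma tstep_cost (regs : seq R) t : ((sem (tstep P c t) regs).2 <= 17)%N.
Proof.
rewrite /tstep !semOp2 semBind2.
match goal with |- context [sem (etaprog ?a ?b ?cc ?d) ?r] =>
  have := etaprog_cost r b cc d; set s1 := sem (etaprog a b cc d) r end.
have := winprog_cost s1.1.2 t s1.1.1.
lia.
Qed.


Definition tval t := x t - (a1 P Cb Vb * y t + a2 P Cb Vb * y (wf P t) +
                 etastar P Cb V Vb y t * V * (y (uf P t) - y (vf P t))) + winval t.

Lemma tloop_cons ts t bst : tloop P c (t :: ts) bst = bind (tstep P c t) (fun pr =>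
      PBr pr.1 bst.1.2 (tloop P c ts bst) (tloop P c ts (t, pr.1, pr.2))).
Proof. by []. Qed.

Lemma tloop_spec ts bst (regs : seq R) :
  GoodC regs -> (forall t, t \in ts -> validt t) ->
  reg regs bst.1.2 (tval bst.1.1) -> reg regs bst.2 (etastar P Cb V Vb y bst.1.1) ->
  let r := (sem (tloop P c ts bst) regs).1 in
  [/\ r.1.1.1 = bst.1.1 \/ r.1.1.1 \in ts, reg r.2 r.1.1.2 (tval r.1.1.1),
      reg r.2 r.1.2 (etastar P Cb V Vb y r.1.1.1), tval bst.1.1 <= tval r.1.1.1
    & forall t, t \in ts -> tval t <= tval r.1.1.1].
Proof.
elim: ts bst regs => [|t ts IH] bst regs hG hts hb1 hb2.
  by split => //; left.
rewrite tloop_cons semBind1.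
have := tstep_spec _ _ hG (hts t (mem_head _ _)).
have G' := GoodC_sem (tstep P c t) _ hG.
move: (sem_ext (tstep P c t) regs) G'.
case: (sem (tstep P c t) regs) => [[pr regs'] cc] /= [e ->] G' [h1 h2].
have hts' : forall t', t' \in ts -> validt t' by move=> t' ht'; apply: hts; rewrite inE ht' orbT.
rewrite (nth_reg h1) (nth_reg (reg_cat _ hb1)).
case: ifP => hle.
  have [r1 r2 r3 r4 r5] := IH bst (regs ++ e) G' hts' (reg_cat _ hb1) (reg_cat _ hb2).
  split => //.
    by case: r1 => [->|hin]; [left | right; rewrite inE hin orbT].
  move=> t'; rewrite inE => /orP[/eqP->|/r5//].
  exact: le_trans hle r4.
have [r1 r2 r3 r4 r5] := IH (t, pr.1, pr.2) (regs ++ e) G' hts' h1 h2.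
split => //.
- by case: r1 => /= [->|hin]; right; rewrite inE ?eqxx ?hin ?orbT.
- apply: le_trans (ltW _) r4 => /=; by rewrite ltNge hle.
- move=> t'; rewrite inE => /orP[/eqP->|/r5//] //.
Qed.

Lemma tloop_cost ts bst (regs : seq R) : ((sem (tloop P c ts bst) regs).2 <= 18 * size ts)%N.
Proof.
elim: ts bst regs => [|t ts IH] bst regs; first by [].
rewrite tloop_cons semBind2 semBr2.
have Ht := tstep_cost regs t.
set s1 := sem (tstep P c t) regs in Ht *.
case: ifP => _.
  by have := IH bst s1.1.2; rewrite (_ : size (t :: ts) = (size ts).+1) //; lia.
by have := IH (t, s1.1.1.1, s1.1.1.2) s1.1.2; rewrite (_ : size (t :: ts) = (size ts).+1) //; lia.
Qed.

End TProgs.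
Arguments GoodC {R}.
Arguments tval {R}.
Arguments winval {R}.
Arguments tstep : simpl never.
Arguments tloop : simpl never.

Definition K0 (P : params) (T L : nat) := minn (L + 1 - dL P) (T + 1 - dT P).

Definition genprog (P : params) (T L : nat) (xi yi : nat -> nat) : prog (nat * seq nat * nat) :=
  POp ASub 0 3 (fun iA =>
  POp ADiv iA 2 (fun iq =>
  PCst (0%:R : rat) (fun iz =>
  PCst ((Lc P)%:R : rat) (fun iL =>
  bind (PBr iL iq (Ret iL) (Ret iq)) (fun iE =>
  POp AMul iE 2 (fun iEV =>
  bind (scanN iq 0 (K0 P T L)) (fun N =>
  bind (preloop yi 2 (T - 1) (fun _ => iz) (fun _ => iz) (fun _ => false)) (fun pp =>
  let c := Cfg iA iz iE iEV (if kind P then 3 else 0) (if kind P then iA else iz) N pp.1.1 pp.1.2 xi yi in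
  bind (tstep P c (tlo P)) (fun pr =>
  bind (tloop P c (iota (tlo P).+1 (thi P - tlo P)) (tlo P, pr.1, pr.2)) (fun b =>
  Ret (b.1.1, [seq (b.1.1 - j)%N | j <- win P N b.1.1 & pp.2 j], b.2))))))))))).

Section Gen.
Variable R : realType.
Variables (P : params) (T L : nat) (xi yi : nat -> nat).

Lemma genprog_cost (inp : seq R) : (1 <= T)%N -> (thi P <= T)%N ->
  ((sem (genprog P T L xi yi) inp).2 <= 60 * T)%N.
Proof.
move=> hT hthi.
rewrite /genprog !semOp2 !semCst2 semBind2.
set s1 := sem (PBr _ _ _ _) _.
have hs1 : (s1.2 <= 1)%N by rewrite /s1 semBr2; case: ifP.
rewrite semOp2 semBind2.
set s2 := sem (scanN _ _ _) _.
have hs2 : (s2.2 <= 2 * K0 P T L)%N by apply: scanN_cost.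
rewrite semBind2.
set s3 := sem (preloop _ _ _ _ _ _) _.
have hs3 : (s3.2 <= 6 * (T - 1))%N by apply: preloop_cost.
rewrite semBind2.
set s4 := sem (tstep _ _ _) _.
have hs4 : (s4.2 <= 17)%N by apply: tstep_cost.
rewrite semBind2.
set s5 := sem (tloop _ _ _ _) _.
have hs5 : (s5.2 <= 18 * size (iota (tlo P).+1 (thi P - tlo P)))%N by apply: tloop_cost.
rewrite size_iota in hs5.
have hK : (K0 P T L <= T + 1)%N by rewrite /K0; lia.
have hR : forall (a : nat * seq nat * nat) (r : seq R), (sem (Ret a) r).2 = 0%N by []. rewrite hR; lia.
Qed.


Lemma gen_correct (Cb V Vb : R) (x y : nat -> R) (inp : seq R) :
  (1 <= T)%N -> 0 < V -> V <= A Cb Vb -> (~~ etaf P -> forall t, uf P t = vf P t) ->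
  (forall t, (tlo P <= t <= thi P)%N -> validt P T t) ->
  reg inp 0 Cb -> reg inp 2 V -> reg inp 3 Vb ->
  (forall k, (1 <= k <= T)%N -> reg inp (xi k) (x k) /\ reg inp (yi k) (y k)) ->
  (tlo P <= thi P)%N ->
  let r := (sem (genprog P T L xi yi) inp).1 in
  gen_in P T L Cb V Vb r.1.1.1 r.1.1.2 (nth 0 r.2 r.1.2) /\
  forall t S eta, gen_in P T L Cb V Vb t S eta ->
    gen_viol P Cb V Vb x y t S eta <= gen_viol P Cb V Vb x y r.1.1.1 r.1.1.2 (nth 0 r.2 r.1.2).
Proof.
move=> hT HV HAV Hetaf Hvalid h0 h2 h3 hxy htt.
rewrite /genprog semOp1 (nth_reg h0) (nth_reg h3).
set r1 := rcons inp _.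
have L1 : forall i v, reg inp i v -> reg r1 i v := fun i v h => reg_rconsW _ h.
have hA1 : reg r1 (size inp) (A Cb Vb) := reg_rcons _ _.
rewrite semOp1 (nth_reg hA1) (nth_reg (L1 _ _ h2)).
set r2 := rcons r1 _.
have L2 : forall i v, reg inp i v -> reg r2 i v := fun i v h => reg_rconsW _ (L1 _ _ h).
have hq2 : reg r2 (size r1) (q Cb V Vb) := reg_rcons _ _.
rewrite semCst1 ratr_nat.
set r3 := rcons r2 _.
have L3 : forall i v, reg inp i v -> reg r3 i v := fun i v h => reg_rconsW _ (L2 _ _ h).
have hz3 : reg r3 (size r2) 0.
  split; first by rewrite /r3 size_rcons.
  by rewrite /r3 nth_rcons ltnn eqxx mulr0n.
rewrite semCst1 ratr_nat.
set r4 := rcons r3 _.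
have L4 : forall i v, reg inp i v -> reg r4 i v := fun i v h => reg_rconsW _ (L3 _ _ h).
have hL4 : reg r4 (size r3) (Lc P)%:R := reg_rcons _ _.
rewrite semBind1.
have hEb : reg (sem (PBr (size r3) (size r1) (Ret (size r3)) (Ret (size r1))) r4).1.2
             (sem (PBr (size r3) (size r1) (Ret (size r3)) (Ret (size r1))) r4).1.1 (E P Cb V Vb) /\
           (sem (PBr (size r3) (size r1) (Ret (size r3)) (Ret (size r1))) r4).1.2 = r4.
  rewrite semBr1 (nth_reg hL4) (nth_reg (reg_rconsW _ (reg_rconsW _ hq2))) /E.
  by case: ifP => _ /=; split => //; do 2 apply: reg_rconsW => //; apply: reg_rcons.
move: hEb; case: (sem (PBr _ _ _ _) r4) => [[iE r5] c5]; cbn [fst snd] => [[hE e5]]; subst r5.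
rewrite semOp1 (nth_reg hE) (nth_reg (L4 _ _ h2)).
set r6 := rcons r4 _.
have L6 : forall i v, reg inp i v -> reg r6 i v := fun i v h => reg_rconsW _ (L4 _ _ h).
have hEV : reg r6 (size r4) (E P Cb V Vb * V) := reg_rcons _ _.
have hA6 : reg r6 (size inp) (A Cb Vb) by do 4 apply: reg_rconsW; exact: hA1.
have hq6 : reg r6 (size r1) (q Cb V Vb) by do 3 apply: reg_rconsW; exact: hq2.
have hz6 : reg r6 (size r2) 0 by do 2 apply: reg_rconsW; exact: hz3.
have hE6 : reg r6 iE (E P Cb V Vb) by apply: reg_rconsW.
rewrite semBind1.
have := @scanN_spec R (size r1) (q Cb V Vb) 0 (K0 P T L) r6 hq6 (fun s' (h : (s' < 0)%N) => False_ind _ (notF h)).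
move: (sem_ext (scanN (size r1) 0 (K0 P T L)) r6).
case: (sem (scanN (size r1) 0 (K0 P T L)) r6) => [[N r7] c7]; cbn [fst snd] => [[e7 ->] [hN1 hN2 hN3]].
have HN : forall s, (s < N)%N = [&& (s + dL P <= L)%N, (s + dT P <= T)%N & s%:R <= q Cb V Vb].
  move=> s; apply/idP/idP.
    move=> hs; have := hN2 s hs; move: hN1; rewrite /K0 => hN1 ->.
    by rewrite andbT; apply/andP; split; lia.
  move=> /and3P[hs1 hs2 hs3]; rewrite ltnNge; apply/negP => hNs.
  have hNK : (N < K0 P T L)%N by rewrite /K0; lia.
  by have := hN3 hNK; rewrite (@le_trans _ _ s%:R) ?ler_nat.
rewrite semBind1.
have hpre0 : forall k, (1 <= k < 2)%N ->
   [/\ reg (r6 ++ e7) (size r2) (Pre1 y k), reg (r6 ++ e7) (size r2) (Pre2 y k)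
     & ((2 <= k)%N -> false = ~~ (y k <= y (k - 1)%N))].
  move=> k /andP[hk1 hk2]; have -> : k = 1%N by lia.
  by rewrite /Pre1 /Pre2 !big_geq //; split => //; apply: reg_cat.
have hyk : forall k, (1 <= k <= T)%N -> reg (r6 ++ e7) (yi k) (y k).
  by move=> k hk; apply: reg_cat; apply: L6; exact: (hxy k hk).2.
have := @preloop_spec R y T yi 2 (T - 1) (fun _ => size r2) (fun _ => size r2) xpred0 (r6 ++ e7)
   (leqnn 2) ltac:(lia) hyk hpre0.
move: (sem_ext (preloop yi 2 (T - 1) (fun _ => size r2) (fun _ => size r2) xpred0) (r6 ++ e7)).
case: (sem (preloop yi 2 (T - 1) (fun _ => size r2) (fun _ => size r2) xpred0) (r6 ++ e7))
  => [[[[p1 p2] bs] r8] c8]; cbn [fst snd] => [[e8 ->] hpre].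
set c := Cfg _ _ _ _ _ _ _ _ _ _ _.
set r8' := (r6 ++ e7) ++ e8.
have Lf : forall i v, reg r6 i v -> reg r8' i v by move=> i v h; do 2 apply: reg_cat.
have G : GoodC P c T Cb V Vb x y r8'.
  split; first by apply: Lf; apply: L6.
  split; first exact: Lf.
  split; first exact: Lf.
  split; first exact: Lf.
  split; first exact: Lf.
  split; first by rewrite /c /a1 /=; case: (kind P); apply: Lf; apply: L6.
  split; first by rewrite /c /a2 /=; case: (kind P); apply: Lf.
  move=> k hk; have [hh1 hh2 _] := hpre k ltac:(lia).
  by split => //; apply: Lf; apply: L6; [exact: (hxy k hk).1 | exact: (hxy k hk).2].
rewrite semBind1.
have := @tstep_spec R P c T Cb V Vb x y r8' (tlo P) G (Hvalid (tlo P) ltac:(lia)).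
have G' := @GoodC_sem R P c T Cb V Vb x y _ (tstep P c (tlo P)) r8' G.
move: (sem_ext (tstep P c (tlo P)) r8') G'.
case: (sem (tstep P c (tlo P)) r8') => [[pr r9] c9]; cbn [fst snd] => [[e9 ->] G9 [h9a h9b]].
rewrite semBind1.
have hts : forall t, t \in iota (tlo P).+1 (thi P - tlo P) -> validt P T t.
  by move=> t; rewrite mem_iota => ht; apply: Hvalid; lia.
have := @tloop_spec R P c T Cb V Vb x y (iota (tlo P).+1 (thi P - tlo P)) (tlo P, pr.1, pr.2)
  (r8' ++ e9) G9 hts h9a h9b.
case: (sem (tloop P c _ _) _) => [[[[t0 v0] e0] r10] c10]; cbn [fst snd] => [[ht0 hv0 he0 hb0 hall]].
cbn [sem fst snd].
have htv : forall t, tval P c Cb V Vb x y t = bestval P Cb V Vb x y N t.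
  by move=> t; rewrite /tval /bestval (@Lm4 R P Cb V Vb y N HV HAV Hetaf t) /winval.
have ht0' : (tlo P <= t0 <= thi P)%N by case: ht0 => [->|]; [lia | rewrite mem_iota; lia].
have [/andP[ht0a ht0b] _ _ _] := Hvalid t0 ht0'.
have hS : [seq (t0 - j)%N | j <- win P N t0 & bs j] = Sstar P y N t0.
  rewrite /Sstar; congr map; apply: eq_in_filter => j; rewrite mem_win => /andP[hj1 hj2].
  have hwa : (1 <= wa N t0)%N by rewrite /wa leq_maxr.
  have hwb : (wb P t0 <= t0)%N by rewrite /wb leq_subr.
  have [_ _ hb] := hpre j ltac:(lia).
  by apply: hb; lia.
rewrite hS (nth_reg he0).
split; first exact: (@Lm3 R P T L Cb V Vb y N HV HAV HN Hetaf t0 ht0').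
move=> t S eta hin.
rewrite (@Lm1 R P Cb V Vb x y N HV HAV Hetaf t0).
apply: le_trans (@Lm2 R P T L Cb V Vb x y N HV HAV HN Hetaf t S eta hin) _.
rewrite -!htv.
have [/andP[hta htb] _] := hin.
case: (ltngtP (tlo P) t) => [hlt|hgt|<-] //; last by lia.
by apply: hall; rewrite mem_iota; lia.
Qed.


End Gen.

Section Fin.
Variable R : realType.

Lemma inputs_x T (Cb Cu V Vb : R) x y k : (1 <= k <= T)%N ->
  reg (inputs T Cb Cu V Vb x y) (3 + k) (x k).
Proof.
move=> hk; split; first by rewrite /inputs !size_cat !size_map !size_iota /=; lia.
rewrite /inputs (_ : (3 + k = (k - 1).+4)%N); last by lia.
rewrite /= nth_cat size_map size_iota (_ : (k - 1 < T)%N); last by lia.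
rewrite (nth_map 0%N); last by rewrite size_iota; lia.
by rewrite nth_iota; [congr x; lia | lia].
Qed.

Lemma inputs_y T (Cb Cu V Vb : R) x y k : (1 <= k <= T)%N ->
  reg (inputs T Cb Cu V Vb x y) (3 + T + k) (y k).
Proof.
move=> hk; split; first by rewrite /inputs !size_cat !size_map !size_iota /=; lia.
rewrite /inputs (_ : (3 + T + k = (T + (k - 1)).+4)%N); last by lia.
rewrite /= nth_cat size_map size_iota (_ : (T + (k - 1) < T)%N = false); last by lia.
rewrite (_ : (T + (k - 1) - T = k - 1)%N); last by lia.
rewrite (nth_map 0%N); last by rewrite size_iota; lia.
by rewrite nth_iota; [congr y; lia | lia].
Qed.

Lemma size_inputs T (Cb Cu V Vb : R) x y : size (inputs T Cb Cu V Vb x y) = (4 + T + T)%N.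
Proof. by rewrite /inputs !size_cat !size_map !size_iota /=; lia. Qed.

Lemma sigmaE (Cb V Vb : R) (s : nat) : ((s%:Z <= sigma Cb V Vb)%R) = (s%:R <= q Cb V Vb).
Proof. by rewrite /sigma floor_ge_int /q /A. Qed.

End Fin.

Definition tmap (rev : bool) (T t : nat) := if rev then (T.+1 - t)%N else t.

Definition prog_of (Pf : nat -> nat -> params) (rev : bool) (T L : nat) : ctree :=
  pcomp (genprog (Pf T L) T L (fun k => 3 + tmap rev T k)%N (fun k => 3 + T + tmap rev T k)%N)
       (4 + T + T) (fun a _ => CLeaf (tmap rev T a.1.1) a.1.2 a.2).

Lemma tmap_range rev T t : (1 <= t <= T)%N -> (1 <= tmap rev T t <= T)%N.
Proof. by rewrite /tmap; case: rev => //; lia. Qed.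

Lemma tmap_inv rev T t : (1 <= t <= T)%N -> tmap rev T (tmap rev T t) = t.
Proof. by rewrite /tmap; case: rev => //; lia. Qed.

Lemma assemble (R : realType) (f : fam) (Pf : nat -> nat -> params) (rev : bool) :
  (forall T L, (1 <= T)%N -> (1 <= L)%N ->
     [/\ (thi (Pf T L) <= T)%N, (~~ etaf (Pf T L) -> forall t, uf (Pf T L) t = vf (Pf T L) t)
       & (forall t, (tlo (Pf T L) <= t <= thi (Pf T L))%N -> validt (Pf T L) T t)]) ->
  (forall T L (Cb V Vb : R) (x y : nat -> R), (1 <= T)%N -> (1 <= L)%N ->
     (forall t S eta, in_family f T L Cb V Vb t S eta ->
        gen_in (Pf T L) T L Cb V Vb (tmap rev T t) S eta /\
        violation f Cb V Vb x y t S eta =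
        gen_viol (Pf T L) Cb V Vb (fun k => x (tmap rev T k)) (fun k => y (tmap rev T k))
                 (tmap rev T t) S eta) /\
     (forall t S eta, gen_in (Pf T L) T L Cb V Vb t S eta ->
        in_family f T L Cb V Vb (tmap rev T t) S eta)) ->
  exists c : nat,
  forall T L : nat, (1 <= T)%N -> (1 <= L)%N ->
  exists p : ctree,
  forall (Cb Cu V Vb : R) (x y : nat -> R),
    Cb > Cu -> Cu > 0 -> V > 0 -> Vb + V <= Cb -> Cu < Vb -> Vb < Cu + V ->
    (forall t, (1 <= t <= T)%N -> 0 <= x t /\ 0 <= y t) ->
    let out := run p (inputs T Cb Cu V Vb x y) in
    (out.2 <= c * T)%N /\
    ((exists t Sx eta, in_family f T L Cb V Vb t Sx eta /\
                      violation f Cb V Vb x y t Sx eta > 0) ->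
     let '(t0, Sx0, eta0) := out.1 in
     in_family f T L Cb V Vb t0 Sx0 eta0 /\
     forall t Sx eta, in_family f T L Cb V Vb t Sx eta ->
       violation f Cb V Vb x y t Sx eta <= violation f Cb V Vb x y t0 Sx0 eta0).
Proof.
move=> hP htr.
exists 60%N => T L hT hL.
exists (prog_of Pf rev T L) => Cb Cu V Vb x y hCb hCu hV hVb hCuVb hVb2 hnn.
have [hthi hetaf hvalid] := hP T L hT hL.
have [htr1 htr2] := htr T L Cb V Vb x y hT hL.
set inp := inputs T Cb Cu V Vb x y.
set xi := (fun k => 3 + tmap rev T k)%N.
set yi := (fun k => 3 + T + tmap rev T k)%N.
have Hrun : run (prog_of Pf rev T L) inp =
  (let r := sem (genprog (Pf T L) T L xi yi) inp in
   ((tmap rev T r.1.1.1.1, r.1.1.1.2, nth 0 r.1.2 r.1.1.2), r.2)).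
  by rewrite /prog_of -(@size_inputs R T Cb Cu V Vb x y) comp_run.
move=> out; rewrite {}/out Hrun.
have hcost := @genprog_cost R (Pf T L) T L xi yi inp hT hthi.
have hV0 : 0 < V by [].
have hAV : V <= A Cb Vb by rewrite /A; lra.
have h0 : reg inp 0 Cb by split; rewrite ?size_inputs.
have h2 : reg inp 2 V by split; rewrite ?size_inputs.
have h3 : reg inp 3 Vb by split; rewrite ?size_inputs.
have hxy : forall k, (1 <= k <= T)%N -> reg inp (xi k) (x (tmap rev T k)) /\
                                          reg inp (yi k) (y (tmap rev T k)).
  move=> k hk; have hk' := @tmap_range rev T k hk.
  by split; [apply: inputs_x | apply: inputs_y].
have := @gen_correct R (Pf T L) T L xi yi Cb V Vb (fun k => x (tmap rev T k))
   (fun k => y (tmap rev T k)) inp hT hV0 hAV hetaf hvalid h0 h2 h3 hxy.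
case: (sem (genprog (Pf T L) T L xi yi) inp) hcost => [[[[t0 S0] e0] rr] cc] /= hcost hgen.
split => //.
move=> [t [S [eta [hin _]]]].
have [gin _] := htr1 t S eta hin.
have htt : (tlo (Pf T L) <= thi (Pf T L))%N by case: gin => /andP[? ?] _; lia.
have [gin0 hopt] := hgen htt.
have ht0 : (1 <= t0 <= T)%N.
  by case: gin0 => ht0 _; have [] := hvalid t0 ht0.
split; first exact: htr2.
move=> t' S' eta' hin'.
have [gin' ->] := htr1 t' S' eta' hin'.
have [_ ->] := htr1 _ _ _ (htr2 _ _ _ gin0).
rewrite tmap_inv //.
exact: hopt.
Qed.

Definition P1 (T L : nat) := Params 0 1 2 1 T 0 false false id id id.
Definition P3 (T L : nat) := Params 0 1 3 1 (T - 1) (L - 1) true false id succn id.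
Definition P5 (T L : nat) := Params 1 0 2 2 T L true true predn id predn.

Section Trans.
Variable R : realType.

Lemma HS (P : params) T L (Cb V Vb : R) t S :
  S_ok Cb V Vb T L (lo P) (dL P) (dT P) S && all (fun s => (s + 2 <= t)%N) S =
  uniq S && all (okS P T L Cb V Vb t) S.
Proof.
rewrite /S_ok -andbA; congr (_ && _); rewrite -all_predI; apply: eq_all => s /=.
rewrite sigmaE /okS.
by case: (lo P <= s)%N; case: (s + dL P <= L)%N; case: (s + dT P <= T)%N;
   case: (s + 2 <= t)%N; case: (s%:R <= q Cb V Vb); rewrite //.
Qed.

Lemma HSf T t (S : seq nat) : (t <= T)%N ->
  all (fun s => t + s + 1 <= T)%N S = all (fun s => s + 2 <= T.+1 - t)%N S.
Proof. by move=> ht; apply: eq_all => s /=; apply/idP/idP; lia. Qed.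

Lemma sum_rev (Cb V Vb : R) y T t (S : seq nat) :
  all (fun s => t + s + 1 <= T)%N S ->
  sum_fwd Cb V Vb y t S =
  \sum_(s <- S) (A Cb Vb - s%:R * V) * (y (T.+1 - (T.+1 - t - s))%N - y (T.+1 - (T.+1 - t - s - 1))%N).
Proof.
move=> /allP hS; rewrite /sum_fwd /A; apply: eq_big_seq => s /hS /= hs.
by congr (_ * (y _ - y _)); lia.
Qed.

Lemma tr_F1 T L (Cb V Vb : R) (x y : nat -> R) :
  (1 <= T)%N -> (1 <= L)%N ->
  (forall t S eta, in_family F1 T L Cb V Vb t S eta ->
     gen_in (P1 T L) T L Cb V Vb (tmap false T t) S eta /\
     violation F1 Cb V Vb x y t S eta =
     gen_viol (P1 T L) Cb V Vb (fun k => x (tmap false T k)) (fun k => y (tmap false T k))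
              (tmap false T t) S eta) /\
  (forall t S eta, gen_in (P1 T L) T L Cb V Vb t S eta ->
     in_family F1 T L Cb V Vb (tmap false T t) S eta).
Proof.
move=> hT hL; split.
  move=> t S eta [hS [ht hall]]; split.
    have := HS (P1 T L) T L Cb V Vb t S; rewrite hS hall /= => /esym/andP[hu ha].
    by split; [|split; [|split]].
  rewrite /violation /rhs /gen_viol /sum_back /a1 /a2 /A /=; ring.
move=> t S eta [ht [hu [ha _]]].
have := HS (P1 T L) T L Cb V Vb t S; rewrite hu ha /= => /andP[hS hall].
by split; [|split].
Qed.

Lemma tr_F2 T L (Cb V Vb : R) (x y : nat -> R) :
  (1 <= T)%N -> (1 <= L)%N ->
  (forall t S eta, in_family F2 T L Cb V Vb t S eta ->
     gen_in (P1 T L) T L Cb V Vb (tmap true T t) S eta /\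
     violation F2 Cb V Vb x y t S eta =
     gen_viol (P1 T L) Cb V Vb (fun k => x (tmap true T k)) (fun k => y (tmap true T k))
              (tmap true T t) S eta) /\
  (forall t S eta, gen_in (P1 T L) T L Cb V Vb t S eta ->
     in_family F2 T L Cb V Vb (tmap true T t) S eta).
Proof.
move=> hT hL; split.
  move=> t S eta [hS [ht hall]]; rewrite /tmap.
  have htT : (t <= T)%N by lia.
  split.
    have := HS (P1 T L) T L Cb V Vb (T.+1 - t) S; rewrite hS -HSf // hall /= => /esym/andP[hu ha].
    by split; [rewrite /tlo /thi /=; lia | split; [|split]].
  rewrite /violation /rhs /gen_viol (sum_rev _ _ _ _ _ _ _ hall) /a1 /a2 /A /=.
  have -> : (T.+1 - (T.+1 - t) = t)%N by lia.
  ring.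
move=> t S eta [ht [hu [ha _]]]; rewrite /tmap.
move: ht; rewrite /tlo /thi /= => ht.
have := HS (P1 T L) T L Cb V Vb t S; rewrite hu ha /= => /andP[hS hall].
split => //; split; first by lia.
by rewrite HSf; [have -> : (T.+1 - (T.+1 - t) = t)%N by lia | lia].
Qed.


Lemma tr_F3 T L (Cb V Vb : R) (x y : nat -> R) :
  (1 <= T)%N -> (1 <= L)%N ->
  (forall t S eta, in_family F3 T L Cb V Vb t S eta ->
     gen_in (P3 T L) T L Cb V Vb (tmap false T t) S eta /\
     violation F3 Cb V Vb x y t S eta =
     gen_viol (P3 T L) Cb V Vb (fun k => x (tmap false T k)) (fun k => y (tmap false T k))
              (tmap false T t) S eta) /\
  (forall t S eta, gen_in (P3 T L) T L Cb V Vb t S eta ->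
     in_family F3 T L Cb V Vb (tmap false T t) S eta).
Proof.
move=> hT hL; have hLc : (L - 1)%:R = L%:R - 1 :> R by rewrite natrB // mulr1n.
split.
  move=> t S eta [hS [he0 [heL [heq [ht hall]]]]]; split.
    have := HS (P3 T L) T L Cb V Vb t S; rewrite hS hall /= => /esym/andP[hu ha].
    split; first by rewrite /tlo /thi /=; lia.
    split => //; split => // _; split => //; split => //; rewrite /Lc /= ?hLc //.
  rewrite /violation /rhs /gen_viol /sum_back /a1 /a2 /A /=; ring.
move=> t S eta [ht [hu [ha he]]].
have [he0 [heL heq]] := he isT.
move: ht; rewrite /tlo /thi /= => ht.
have := HS (P3 T L) T L Cb V Vb t S; rewrite hu ha /= => /andP[hS hall].
by do ![split => //]; try lia; move: heL; rewrite /Lc /= ?hLc.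
Qed.

Lemma tr_F5 T L (Cb V Vb : R) (x y : nat -> R) :
  (1 <= T)%N -> (1 <= L)%N ->
  (forall t S eta, in_family F5 T L Cb V Vb t S eta ->
     gen_in (P5 T L) T L Cb V Vb (tmap false T t) S eta /\
     violation F5 Cb V Vb x y t S eta =
     gen_viol (P5 T L) Cb V Vb (fun k => x (tmap false T k)) (fun k => y (tmap false T k))
              (tmap false T t) S eta) /\
  (forall t S eta, gen_in (P5 T L) T L Cb V Vb t S eta ->
     in_family F5 T L Cb V Vb (tmap false T t) S eta).
Proof.
move=> hT hL; have hLc : (L - 1)%:R = L%:R - 1 :> R by rewrite natrB // mulr1n.
split.
  move=> t S eta [hS [he0 [heL [heq [ht hall]]]]]; split.
    have := HS (P5 T L) T L Cb V Vb t S; rewrite hS hall /= => /esym/andP[hu ha].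
    split; first by rewrite /tlo /thi /=; lia.
    split => //; split => // _; split => //; split => //; rewrite /Lc /= ?hLc //.
  rewrite /violation /rhs /gen_viol /sum_back /a1 /a2 /A /=; ring.
move=> t S eta [ht [hu [ha he]]].
have [he0 [heL heq]] := he isT.
move: ht; rewrite /tlo /thi /= => ht.
have := HS (P5 T L) T L Cb V Vb t S; rewrite hu ha /= => /andP[hS hall].
by split => //; split => //; lia.
Qed.

Lemma tr_F4 T L (Cb V Vb : R) (x y : nat -> R) :
  (1 <= T)%N -> (1 <= L)%N ->
  (forall t S eta, in_family F4 T L Cb V Vb t S eta ->
     gen_in (P3 T L) T L Cb V Vb (tmap true T t) S eta /\
     violation F4 Cb V Vb x y t S eta =
     gen_viol (P3 T L) Cb V Vb (fun k => x (tmap true T k)) (fun k => y (tmap true T k))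
              (tmap true T t) S eta) /\
  (forall t S eta, gen_in (P3 T L) T L Cb V Vb t S eta ->
     in_family F4 T L Cb V Vb (tmap true T t) S eta).
Proof.
move=> hT hL; have hLc : (L - 1)%:R = L%:R - 1 :> R by rewrite natrB // mulr1n.
split.
  move=> t S eta [hS [he0 [heL [heq [ht hall]]]]]; rewrite /tmap.
  have htT : (t <= T)%N by lia.
  split.
    have := HS (P3 T L) T L Cb V Vb (T.+1 - t) S; rewrite hS -HSf // hall /= => /esym/andP[hu ha].
    split; first by rewrite /tlo /thi /=; lia.
    split => //; split => // _; split => //; split => //; rewrite /Lc /= ?hLc //.
  rewrite /violation /rhs /gen_viol (sum_rev _ _ _ _ _ _ _ hall) /a1 /a2 /A /=.
  have -> : (T.+1 - (T.+1 - t) = t)%N by lia.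
  have -> : (T.+1 - (T.+1 - t).+1 = t.-1)%N by lia.
  ring.
move=> t S eta [ht [hu [ha he]]]; rewrite /tmap.
have [he0 [heL heq]] := he isT.
move: ht; rewrite /tlo /thi /= => ht.
have := HS (P3 T L) T L Cb V Vb t S; rewrite hu ha /= => /andP[hS hall].
have hall' : all (fun s => (T.+1 - t + s + 1 <= T)%N) S.
  by rewrite HSf; [have -> : (T.+1 - (T.+1 - t) = t)%N by lia | lia].
by do ![split => //]; try lia; move: heL; rewrite /Lc /= ?hLc.
Qed.

Lemma tr_F6 T L (Cb V Vb : R) (x y : nat -> R) :
  (1 <= T)%N -> (1 <= L)%N ->
  (forall t S eta, in_family F6 T L Cb V Vb t S eta ->
     gen_in (P5 T L) T L Cb V Vb (tmap true T t) S eta /\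
     violation F6 Cb V Vb x y t S eta =
     gen_viol (P5 T L) Cb V Vb (fun k => x (tmap true T k)) (fun k => y (tmap true T k))
              (tmap true T t) S eta) /\
  (forall t S eta, gen_in (P5 T L) T L Cb V Vb t S eta ->
     in_family F6 T L Cb V Vb (tmap true T t) S eta).
Proof.
move=> hT hL; have hLc : (L - 1)%:R = L%:R - 1 :> R by rewrite natrB // mulr1n.
split.
  move=> t S eta [hS [he0 [heL [heq [ht hall]]]]]; rewrite /tmap.
  have htT : (t <= T)%N by lia.
  split.
    have := HS (P5 T L) T L Cb V Vb (T.+1 - t) S; rewrite hS -HSf // hall /= => /esym/andP[hu ha].
    split; first by rewrite /tlo /thi /=; lia.
    split => //; split => // _; split => //; split => //; rewrite /Lc /= ?hLc //.
  rewrite /violation /rhs /gen_viol (sum_rev _ _ _ _ _ _ _ hall) /a1 /a2 /A /=.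
  have -> : (T.+1 - (T.+1 - t) = t)%N by lia.
  have -> : (T.+1 - (T.+1 - t).-1 = t.+1)%N by lia.
  ring.
move=> t S eta [ht [hu [ha he]]]; rewrite /tmap.
have [he0 [heL heq]] := he isT.
move: ht; rewrite /tlo /thi /= => ht.
have := HS (P5 T L) T L Cb V Vb t S; rewrite hu ha /= => /andP[hS hall].
have hall' : all (fun s => (T.+1 - t + s + 1 <= T)%N) S.
  by rewrite HSf; [have -> : (T.+1 - (T.+1 - t) = t)%N by lia | lia].
by do ![split => //]; try lia; move: heL; rewrite /Lc /= ?hLc.
Qed.

End Trans.

Theorem proposition7 (R : realType) (f : fam) :
  exists c : nat,
  forall T L : nat, (1 <= T)%N -> (1 <= L)%N ->
  exists p : ctree,
  forall (Cb Cu V Vb : R) (x y : nat -> R),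
    Cb > Cu -> Cu > 0 -> V > 0 -> Vb + V <= Cb -> Cu < Vb -> Vb < Cu + V ->
    (forall t, (1 <= t <= T)%N -> 0 <= x t /\ 0 <= y t) ->
    let out := run p (inputs T Cb Cu V Vb x y) in
    (out.2 <= c * T)%N /\
    ((exists t Sx eta, in_family f T L Cb V Vb t Sx eta /\
                      violation f Cb V Vb x y t Sx eta > 0) ->
     let '(t0, Sx0, eta0) := out.1 in
     in_family f T L Cb V Vb t0 Sx0 eta0 /\
     forall t Sx eta, in_family f T L Cb V Vb t Sx eta ->
       violation f Cb V Vb x y t Sx eta <= violation f Cb V Vb x y t0 Sx0 eta0).
Proof.
case: f.
- apply: (@assemble R F1 P1 false); last exact: tr_F1.
  move=> T L hT hL; split => //; rewrite /thi /tlo /= => t ht; split => //.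
- apply: (@assemble R F2 P1 true); last exact: tr_F2.
  move=> T L hT hL; split => //; rewrite /thi /tlo /= => t ht; split => //.
- apply: (@assemble R F3 P3 false); last exact: tr_F3.
  move=> T L hT hL; split; rewrite /thi /tlo /= ?leq_subr // => t ht; split => //; rewrite /uf /=; lia.
- apply: (@assemble R F4 P3 true); last exact: tr_F4.
  move=> T L hT hL; split; rewrite /thi /tlo /= ?leq_subr // => t ht; split => //; rewrite /uf /=; lia.
- apply: (@assemble R F5 P5 false); last exact: tr_F5.
  move=> T L hT hL; split; rewrite /thi /tlo /= // => t ht; split => //; rewrite /wf /vf /=; lia.
- apply: (@assemble R F6 P5 true); last exact: tr_F6.
  move=> T L hT hL; split; rewrite /thi /tlo /= // => t ht; split => //; rewrite /wf /vf /=; lia.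
Qed.
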